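(* Let $\mu>0$. There is $K=K(\mu)$ such that for every integer $k\ge K$ the following holds. There exist a $C^2$ function $f:\mathbb{R}\to\mathbb{R}$ with $f'(0)=0$ and numbers $C=C(\mu,k)\in(0,\tfrac25]$ and $t_0=t_0(\mu,k)$ with $t_0-C>0$, such that: (i) $u_1=\cos(kx)f(t)$ solves $\ddot u_1+\operatorname{div}\!\left[\begin{pmatrix}\frac{\mu}{2k^2}&0\\0&1+\frac{\mu}{4k^2}\end{pmatrix}\nabla u_1\right]=-\mu u_1$ for $t\le t_0-C$; (ii) with $u_2=\cos(kx)e^{-k(t-t_0)}$, which solves $\ddot u_2+\operatorname{div}\!\left[\begin{pmatrix}1+\frac{\mu}{k^2}&0\\0&1+\frac{\mu}{4k^2}\end{pmatrix}\nabla u_2\right]=-\mu u_2$, there is a transformation of $u_1$ into $u_2$ within $\mathbb{T}^2\times[t_0-C,t_0]$: a $C^2$ function $u$ and a $C^1$ real $2\times 2$ matrix function $A$ in the regularity class $R(5k^2/\mu,10)$ with $\ddot u+\operatorname{div}(A\nabla u)=-\mu u$ on $\mathbb{T}^2\times\mathbb{R}$, such that $u=u_1$ and $A=\begin{pmatrix}\frac{\mu}{2k^2}&0\\0&1+\frac{\mu}{4k^2}\end{pmatrix}$ for $t\le t_0-C$, and $u=u_2$, $A=\begin{pmatrix}1+\frac{\mu}{k^2}&0\\0&1+\frac{\mu}{4k^2}\end{pmatrix}$ for $t\ge t_0$.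
   Context: $\mathbb{T}^2=(\mathbb{R}/2\pi\mathbb{Z})^2$ with coordinates $(x,y)$; $t$ the third coordinate. $\ddot u+\operatorname{div}(A\nabla u)$ means $\partial_t^2u+\sum_{i,j\in\{x,y\}}\partial_i(A_{ij}\partial_ju)$. Regularity class $R(\Lambda,C)$: $\Lambda^{-1}|\xi|^2\le\xi^TA\xi\le\Lambda|\xi|^2$ for all $\xi\in\mathbb{R}^2$ at every point, and the entries of $A$ are $C^1$ with all first partial derivatives in $x,y,t$ bounded by $C$ in absolute value. *)

(* Defs.v *)
From Stdlib Require Import Reals Lra.
From Coquelicot Require Import Coquelicot.
Open Scope R_scope.

(* Functions on T^2 x R are represented as functions R -> R -> R -> R
   (arguments x, y, t) that are 2*PI-periodic in x and in y. *)
Definition fn3 := R -> R -> R -> R.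

Inductive idx : Type := IX | IY.

Definition dsp (i : idx) (F : fn3) : fn3 :=
  match i with
  | IX => fun x y t => Derive (fun s => F s y t) x
  | IY => fun x y t => Derive (fun s => F x s t) y
  end.

Definition dt (F : fn3) : fn3 := fun x y t => Derive (fun s => F x y s) t.

Definition periodic2 (F : fn3) : Prop :=
  forall x y t, F (x + 2 * PI) y t = F x y t /\ F x (y + 2 * PI) t = F x y t.

Definition cont3 (F : fn3) : Prop :=
  forall x y t,
    continuous (fun p : R * R * R => F (fst (fst p)) (snd (fst p)) (snd p))
               (x, y, t).

Definition partials_exist (F : fn3) : Prop :=
  forall x y t,
    ex_derive (fun s => F s y t) x /\ ex_derive (fun s => F x s t) y /\
    ex_derive (fun s => F x y s) t.

Definition C1_3 (F : fn3) : Prop :=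
  cont3 F /\ partials_exist F /\
  cont3 (dsp IX F) /\ cont3 (dsp IY F) /\ cont3 (dt F).

Definition C2_3 (F : fn3) : Prop :=
  C1_3 F /\ C1_3 (dsp IX F) /\ C1_3 (dsp IY F) /\ C1_3 (dt F).

Definition C2_1 (f : R -> R) : Prop :=
  (forall t, ex_derive_n f 2 t) /\ (forall t, continuity_pt (Derive_n f 2) t).

Definition matfn := idx -> idx -> fn3.

Definition wave_op (A : matfn) (u : fn3) (x y t : R) : R :=
  dt (dt u) x y t
  + dsp IX (fun a b c => A IX IX a b c * dsp IX u a b c) x y t
  + dsp IX (fun a b c => A IX IY a b c * dsp IY u a b c) x y t
  + dsp IY (fun a b c => A IY IX a b c * dsp IX u a b c) x y t
  + dsp IY (fun a b c => A IY IY a b c * dsp IY u a b c) x y t.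

Definition solves_at (mu : R) (A : matfn) (u : fn3) (x y t : R) : Prop :=
  wave_op A u x y t = - mu * u x y t.

Definition quadform (A : matfn) (x y t xi1 xi2 : R) : R :=
  A IX IX x y t * xi1 * xi1 + A IX IY x y t * xi1 * xi2
  + A IY IX x y t * xi2 * xi1 + A IY IY x y t * xi2 * xi2.

Definition reg_class (Lam Cb : R) (A : matfn) : Prop :=
  (forall x y t xi1 xi2,
      / Lam * (xi1 ^ 2 + xi2 ^ 2) <= quadform A x y t xi1 xi2 /\
      quadform A x y t xi1 xi2 <= Lam * (xi1 ^ 2 + xi2 ^ 2)) /\
  (forall i j, C1_3 (A i j)) /\
  (forall i j x y t,
      Rabs (dsp IX (A i j) x y t) <= Cb /\
      Rabs (dsp IY (A i j) x y t) <= Cb /\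
      Rabs (dt (A i j) x y t) <= Cb).

Definition diagmat (a b : R) : matfn :=
  fun i j => fun _ _ _ =>
    match i, j with
    | IX, IX => a
    | IY, IY => b
    | _, _ => 0
    end.

(* Main.v *)
Require Import Defs.
From Stdlib Require Import Reals Lra Psatz FunctionalExtensionality.
From Coquelicot Require Import Coquelicot.
Open Scope R_scope.

Definition glue (c : R) (f1 f2 : R -> R) (t : R) : R :=
  if Rle_dec t c then f1 t else f2 t.

Lemma glue_left c f1 f2 t : t <= c -> glue c f1 f2 t = f1 t.
Proof. intros H; unfold glue; destruct (Rle_dec t c); [reflexivity | lra]. Qed.
Lemma glue_right c f1 f2 t : c < t -> glue c f1 f2 t = f2 t.
Proof. intros H; unfold glue; destruct (Rle_dec t c); [lra | reflexivity]. Qed.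

Lemma locally_lt (t c : R) : t < c -> locally t (fun s => s < c).
Proof.
  intros H. assert (Hp : 0 < c - t) by lra.
  exists (mkposreal _ Hp). intros s Hs. unfold ball in Hs; simpl in Hs.
  unfold AbsRing_ball, abs, minus, plus, opp in Hs; simpl in Hs.
  apply Rabs_lt_between in Hs. lra.
Qed.
Lemma locally_gt (t c : R) : c < t -> locally t (fun s => c < s).
Proof.
  intros H. assert (Hp : 0 < t - c) by lra.
  exists (mkposreal _ Hp). intros s Hs. unfold ball in Hs; simpl in Hs.
  unfold AbsRing_ball, abs, minus, plus, opp in Hs; simpl in Hs.
  apply Rabs_lt_between in Hs. lra.
Qed.

Lemma glue_derive (c : R) (f1 f2 f1' f2' : R -> R) :
  (forall t, is_derive f1 t (f1' t)) -> (forall t, is_derive f2 t (f2' t)) ->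
  f1 c = f2 c -> f1' c = f2' c ->
  forall t, is_derive (glue c f1 f2) t (glue c f1' f2' t).
Proof.
  intros H1 H2 E0 E1 t.
  destruct (Rtotal_order t c) as [Hlt | [Heq | Hgt]].
  - rewrite glue_left by lra.
    apply is_derive_ext_loc with f1; [|apply H1].
    generalize (locally_lt t c Hlt). apply filter_imp. intros s Hs.
    rewrite glue_left by lra; reflexivity.
  - subst t. rewrite glue_left by lra.
    apply is_derive_Reals. intros eps Heps.
    destruct (proj1 (is_derive_Reals _ _ _) (H1 c) eps Heps) as [d1 Hd1].
    destruct (proj1 (is_derive_Reals _ _ _) (H2 c) eps Heps) as [d2 Hd2].
    assert (Hd : 0 < Rmin d1 d2) by (apply Rmin_pos; apply cond_pos).
    exists (mkposreal _ Hd). intros h Hh0 Hh. simpl in Hh.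
    rewrite (glue_left c f1 f2 c) by lra.
    destruct (Rle_dec h 0) as [Hn|Hp].
    + rewrite glue_left by lra. apply Hd1; auto.
      apply Rlt_le_trans with (1 := Hh). apply Rmin_l.
    + rewrite glue_right by lra. rewrite E0, E1. apply Hd2; auto.
      apply Rlt_le_trans with (1 := Hh). apply Rmin_r.
  - rewrite glue_right by lra.
    apply is_derive_ext_loc with f2; [|apply H2].
    generalize (locally_gt t c Hgt). apply filter_imp. intros s Hs.
    rewrite glue_right by lra; reflexivity.
Qed.

Lemma glue_cont (c : R) (f1 f2 : R -> R) :
  (forall t, continuous f1 t) -> (forall t, continuous f2 t) ->
  f1 c = f2 c -> forall t, continuous (glue c f1 f2) t.
Proof.
  intros H1 H2 E0 t.
  destruct (Rtotal_order t c) as [Hlt | [Heq | Hgt]].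
  - apply continuous_ext_loc with f1; [|apply H1].
    generalize (locally_lt t c Hlt). apply filter_imp. intros s Hs.
    rewrite glue_left by lra; reflexivity.
  - subst t. apply continuity_pt_filterlim.
    intros eps Heps.
    destruct (proj2 (continuity_pt_filterlim _ _) (H1 c) eps Heps) as [d1 [Hd1 P1]].
    destruct (proj2 (continuity_pt_filterlim _ _) (H2 c) eps Heps) as [d2 [Hd2 P2]].
    exists (Rmin d1 d2). split; [apply Rmin_pos; auto|].
    intros x [_ Hx]. simpl in *. unfold R_dist in *.
    rewrite (glue_left c f1 f2 c) by lra.
    assert (Hx1 : Rabs (x - c) < d1) by (apply Rlt_le_trans with (1 := Hx); apply Rmin_l).
    assert (Hx2 : Rabs (x - c) < d2) by (apply Rlt_le_trans with (1 := Hx); apply Rmin_r).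
    destruct (Rle_dec x c).
    + rewrite glue_left by lra.
      destruct (Req_dec x c) as [->|Hne].
      * rewrite Rminus_diag, Rabs_R0; auto.
      * apply P1. split; auto. split; auto. exact I.
    + rewrite glue_right by lra. rewrite E0. apply P2. split; [split; [exact I| lra]|auto].
  - apply continuous_ext_loc with f2; [|apply H2].
    generalize (locally_gt t c Hgt). apply filter_imp. intros s Hs.
    rewrite glue_right by lra; reflexivity.
Qed.

Definition sep (p r : R -> R) : fn3 := fun x _ t => p x * r t.
Definition C1f (p : R -> R) : Prop :=
  (forall x, ex_derive p x) /\ (forall x, continuous (Derive p) x).

Lemma cont3_sep p r : (forall x, continuous p x) -> (forall t, continuous r t) ->
  cont3 (sep p r).
Proof.
  intros Hp Hr x y t. unfold sep.
  apply (continuous_mult (fun q : R * R * R => p (fst (fst q))) (fun q => r (snd q))).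
  - apply continuous_comp with (f := fun q : R*R*R => fst (fst q)) (g := p).
    + apply continuous_comp with (f := fun q : R*R*R => fst q) (g := fun q : R*R => fst q).
      * apply continuous_fst.
      * apply continuous_fst.
    + apply Hp.
  - apply continuous_comp with (f := fun q : R*R*R => snd q) (g := r).
    + apply continuous_snd.
    + apply Hr.
Qed.

Lemma dspX_sep p r : dsp IX (sep p r) = sep (Derive p) r.
Proof.
  apply functional_extensionality; intro x; apply functional_extensionality; intro y;
  apply functional_extensionality; intro t. unfold dsp, sep. apply Derive_scal_l.
Qed.
Lemma dspY_sep p r : dsp IY (sep p r) = sep (fun _ => 0) r.
Proof.
  apply functional_extensionality; intro x; apply functional_extensionality; intro y;
  apply functional_extensionality; intro t. unfold dsp, sep. rewrite Derive_const. ring.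
Qed.
Lemma dt_sep p r : dt (sep p r) = sep p (Derive r).
Proof.
  apply functional_extensionality; intro x; apply functional_extensionality; intro y;
  apply functional_extensionality; intro t. unfold dt, sep. apply Derive_scal.
Qed.

Lemma C1f_cont p : C1f p -> forall x, continuous p x.
Proof. intros [H _] x. exact (@ex_derive_continuous R_AbsRing R_NormedModule p x (H x)). Qed.

Lemma C1f_zero : C1f (fun _ => 0).
Proof.
  split.
  - intros; apply ex_derive_const.
  - intros x. apply continuous_ext with (fun _ => 0).
    + intros; rewrite Derive_const; reflexivity.
    + apply continuous_const.
Qed.

Lemma C1f_const c : C1f (fun _ => c).
Proof.
  split.
  - intros; apply ex_derive_const.
  - intros x. apply continuous_ext with (fun _ => 0).
    + intros; rewrite Derive_const; reflexivity.
    + apply continuous_const.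
Qed.

Lemma C1_3_sep p r : C1f p -> C1f r -> C1_3 (sep p r).
Proof.
  intros Hp Hr. unfold C1_3.
  rewrite dspX_sep, dspY_sep, dt_sep.
  split; [apply cont3_sep; apply C1f_cont; auto|].
  split; [|split; [|split]].
  - intros x y t. unfold sep. split; [|split].
    + apply ex_derive_mult; [apply Hp | apply ex_derive_const].
    + apply ex_derive_const.
    + apply ex_derive_scal with (f := r). apply Hr.
  - apply cont3_sep; [apply Hp | apply C1f_cont; auto].
  - apply cont3_sep; [apply C1f_cont, C1f_zero | apply C1f_cont; auto].
  - apply cont3_sep; [apply C1f_cont; auto | apply Hr].
Qed.

Lemma C2_3_sep p r : C1f p -> C1f (Derive p) -> C1f r -> C1f (Derive r) -> C2_3 (sep p r).
Proof.
  intros. unfold C2_3. rewrite dspX_sep, dspY_sep, dt_sep.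
  split; [|split; [|split]]; apply C1_3_sep; first [assumption | apply C1f_zero].
Qed.

Lemma wave_sep (A : matfn) (aa : R -> R) (bb : R) (p r : R -> R) x y t :
  (forall x y t, A IX IX x y t = aa t) -> (forall x y t, A IX IY x y t = 0) ->
  (forall x y t, A IY IX x y t = 0) -> (forall x y t, A IY IY x y t = bb) ->
  wave_op A (sep p r) x y t =
  p x * Derive (Derive r) t + Derive (Derive p) x * (aa t * r t).
Proof.
  intros HXX HXY HYX HYY. unfold wave_op.
  rewrite dt_sep, dt_sep, dspX_sep, dspY_sep. unfold dsp, sep.
  rewrite (Derive_ext (fun s => A IX IX s y t * (Derive p s * r t))
                      (fun s => Derive p s * (aa t * r t)))
    by (intros; rewrite HXX; ring).
  rewrite Derive_scal_l.
  rewrite (Derive_ext (fun s => A IX IY s y t * (0 * r t)) (fun _ => 0))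
    by (intros; rewrite HXY; ring).
  rewrite (Derive_ext (fun s => A IY IX x s t * (Derive p x * r t)) (fun _ => 0))
    by (intros; rewrite HYX; ring).
  rewrite (Derive_ext (fun s => A IY IY x s t * (0 * r t)) (fun _ => 0))
    by (intros; ring).
  rewrite !Derive_const. ring.
Qed.

Definition om (mu : R) := sqrt (mu / 2).
Definition Ee (mu k : R) := 2 * om mu * sqrt k.
Definition Y3s (mu k : R) := Ee mu k - om mu ^ 2.
Definition y3 (mu k : R) := sqrt (Y3s mu k).
Definition aP (mu k : R) := (Y3s mu k / Ee mu k) ^ 2.
Definition bP (mu k : R) := om mu ^ 2 / Ee mu k ^ 2.

Definition HypMK (mu k : R) : Prop :=
  0 < mu /\ 100 <= Y3s mu k /\ 50 <= k /\ mu <= k ^ 2 /\ 4 * om mu <= k.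

Lemma om_pos mu : 0 < mu -> 0 < om mu.
Proof. intros; unfold om; apply sqrt_lt_R0; lra. Qed.
Lemma om_sq mu : 0 < mu -> om mu ^ 2 = mu / 2.
Proof. intros; unfold om; simpl; rewrite Rmult_1_r, sqrt_sqrt; lra. Qed.

Lemma params mu k : HypMK mu k ->
  0 < om mu /\ om mu ^ 2 = mu / 2 /\ 0 < Ee mu k /\ Ee mu k = Y3s mu k + om mu ^ 2 /\
  0 < y3 mu k /\ y3 mu k ^ 2 = Y3s mu k /\ 10 <= y3 mu k /\
  bP mu k = / (4 * k) /\ aP mu k + bP mu k * y3 mu k ^ 2 = Y3s mu k / Ee mu k /\
  0 < aP mu k /\ aP mu k <= 1 /\ y3 mu k <= 4 * k / 5 /\ 0 < bP mu k.
Proof.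
  intros (Hmu & HY & Hk & Hmk & Hok).
  assert (Ho := om_pos mu Hmu). assert (Ho2 := om_sq mu Hmu).
  assert (Hsk : 0 < sqrt k) by (apply sqrt_lt_R0; lra).
  assert (Hsk2 : sqrt k * sqrt k = k) by (apply sqrt_sqrt; lra).
  assert (HE : 0 < Ee mu k) by (unfold Ee; apply Rmult_lt_0_compat; [lra|auto]).
  assert (HEY : Ee mu k = Y3s mu k + om mu ^ 2) by (unfold Y3s; ring).
  assert (Hy : 0 < y3 mu k) by (unfold y3; apply sqrt_lt_R0; lra).
  assert (Hy2 : y3 mu k ^ 2 = Y3s mu k) by (unfold y3; simpl; rewrite Rmult_1_r, sqrt_sqrt; lra).
  assert (Hy10 : 10 <= y3 mu k).
  { apply Rnot_lt_le; intro H. assert (y3 mu k ^ 2 < 100) by nra. lra. }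
  assert (HbP : bP mu k = / (4 * k)).
  { unfold bP, Ee. field_simplify_eq; [|split; lra].
    replace (sqrt k ^ 2) with k by (simpl; lra). ring. }
  repeat split; auto.
  - unfold aP, bP. rewrite Hy2, HEY. field. lra.
  - unfold aP. apply pow_lt. apply Rdiv_lt_0_compat; lra.
  - unfold aP. rewrite <- (pow1 2). apply pow_incr. split.
    + apply Rlt_le, Rdiv_lt_0_compat; lra.
    + apply Rmult_le_reg_r with (Ee mu k); auto. unfold Rdiv; rewrite Rmult_assoc, Rinv_l by lra. nra.
  -
    assert (Hsq : sqrt k <= k).
    { apply Rnot_lt_le; intro H0. nra. }
    assert (Y3s mu k <= k ^ 2 / 2).
    { unfold Y3s, Ee. nra. }
    apply Rnot_lt_le; intro H1. assert (y3 mu k ^ 2 > (4 * k / 5) ^ 2) by nra. nra.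
  - rewrite HbP. apply Rinv_0_lt_compat; lra.
Qed.

Definition Yg (a b c s : R) := ((s - c) + sqrt ((s - c) ^ 2 + 4 * a * b)) / (2 * b).
Definition Rg (a b y : R) := y ^ 2 / (a + b * y ^ 2).
Definition dRg (a b y : R) := 2 * a * y / (a + b * y ^ 2) ^ 2.

Lemma Yg_facts a b c s : 0 < a -> 0 < b ->
  0 < sqrt ((s - c) ^ 2 + 4 * a * b) /\ sqrt ((s - c) ^ 2 + 4 * a * b) * sqrt ((s - c) ^ 2 + 4 * a * b) = (s - c) ^ 2 + 4 * a * b /\ (s - c) < sqrt ((s - c) ^ 2 + 4 * a * b) /\ 0 < Yg a b c s.
Proof.
  intros Ha Hb. set (S := sqrt ((s - c) ^ 2 + 4 * a * b)).
  assert (HD : 0 < (s - c) ^ 2 + 4 * a * b) by (assert (0 <= (s-c)^2) by apply pow2_ge_0; assert (0 < a*b) by (apply Rmult_lt_0_compat; auto); lra).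
  assert (HS : 0 < S) by (apply sqrt_lt_R0; auto).
  assert (HS2 : S * S = (s - c) ^ 2 + 4 * a * b) by (apply sqrt_sqrt; lra).
  assert (Hab : 0 < a * b) by (apply Rmult_lt_0_compat; auto).
  assert (Hlt : s - c < S).
  { destruct (Rle_or_lt (s - c) 0); [lra|]. apply Rnot_le_lt; intro Hle.
    assert (S * S <= (s - c) * (s - c)) by (apply Rmult_le_compat; lra). simpl in HS2. lra. }
  assert (Hlt2 : c - s < S).
  { destruct (Rle_or_lt (c - s) 0); [lra|]. apply Rnot_le_lt; intro Hle.
    assert (S * S <= (c - s) * (c - s)) by (apply Rmult_le_compat; lra). simpl in HS2. nra. }
  repeat split; auto.
  unfold Yg. fold S. apply Rdiv_lt_0_compat; lra.
Qed.

Lemma Yg_quad a b c s : 0 < a -> 0 < b ->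
  b * Yg a b c s ^ 2 - (s - c) * Yg a b c s - a = 0.
Proof.
  intros Ha Hb. destruct (Yg_facts a b c s Ha Hb) as (HS & HS2 & _ & _).
  unfold Yg. set (S := sqrt _) in *. field_simplify_eq; [|lra]. nra.
Qed.

Lemma Yg_eq a b c s : 0 < a -> 0 < b -> s = c - a / Yg a b c s + b * Yg a b c s.
Proof.
  intros Ha Hb. destruct (Yg_facts a b c s Ha Hb) as (_ & _ & _ & Hy).
  assert (Hq := Yg_quad a b c s Ha Hb). set (y := Yg a b c s) in *.
  field_simplify_eq; [|lra]. nra.
Qed.

Lemma Yg_inv a b c y : 0 < a -> 0 < b -> 0 < y -> Yg a b c (c - a / y + b * y) = y.
Proof.
  intros Ha Hb Hy. unfold Yg.
  replace (c - a / y + b * y - c) with (b * y - a / y) by ring.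
  replace ((b * y - a / y) ^ 2 + 4 * a * b) with ((b * y + a / y) ^ 2)
    by (field; lra).
  rewrite sqrt_pow2.
  - field; lra.
  - apply Rlt_le. apply Rplus_lt_0_compat; [nra | apply Rdiv_lt_0_compat; auto].
Qed.

Lemma hinc a b y1 y2 : 0 < a -> 0 < b -> 0 < y1 -> y1 < y2 -> - a / y1 + b * y1 < - a / y2 + b * y2.
Proof.
  intros Ha Hb H1 H12.
  assert (a / y2 < a / y1).
  { unfold Rdiv. apply Rmult_lt_compat_l; auto. apply Rinv_lt_contravar; nra. }
  nra.
Qed.

Lemma Yg_mono a b c s1 s2 : 0 < a -> 0 < b -> s1 <= s2 -> Yg a b c s1 <= Yg a b c s2.
Proof.
  intros Ha Hb H. apply Rnot_lt_le. intro Hlt.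
  destruct (Yg_facts a b c s2 Ha Hb) as (_ & _ & _ & Hy2).
  assert (E1 := Yg_eq a b c s1 Ha Hb). assert (E2 := Yg_eq a b c s2 Ha Hb).
  assert (Hh := hinc a b _ _ Ha Hb Hy2 Hlt). lra.
Qed.

Lemma Yg_deriv a b c s : 0 < a -> 0 < b ->
  is_derive (Yg a b c) s (Rg a b (Yg a b c s)).
Proof.
  intros Ha Hb.
  destruct (Yg_facts a b c s Ha Hb) as (HS & HS2 & Hlt & Hy).
  unfold Yg. auto_derive.
  - nra.
  - unfold Rg. set (S := sqrt ((s - c) ^ 2 + 4 * a * b)) in *.
    fold S. unfold Yg. fold S.
    assert (HN : 0 < a + b * ((s - c + S) / (2 * b)) ^ 2).
    { apply Rplus_lt_0_compat; auto. apply Rmult_lt_0_compat; auto.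
      apply pow_lt. unfold Yg in Hy; fold S in Hy; exact Hy. }
    replace (sqrt ((s + - c) * ((s + - c) * 1) + 4 * a * b)) with S by (unfold S; f_equal; ring).
    assert (HQ : 0 < (s - c + S) ^ 2) by (apply pow_lt; unfold Yg in Hy; fold S in Hy; apply Rmult_lt_reg_r with (/ (2 * b)); [apply Rinv_0_lt_compat; lra | lra]).
    field_simplify_eq; [| repeat split; nra].
    replace (S ^ 2) with ((s - c) ^ 2 + 4 * a * b) by (simpl; lra).
    replace (S ^ 3) with (((s - c) ^ 2 + 4 * a * b) * S) by (simpl; nra).
    replace (S ^ 4) with (((s - c) ^ 2 + 4 * a * b) ^ 2) by (simpl; nra).
    ring.
Qed.

Lemma Rg_deriv a b y : 0 < a -> 0 < b -> is_derive (Rg a b) y (dRg a b y).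
Proof.
  intros Ha Hb. assert (0 < a + b * y ^ 2) by nra.
  unfold Rg, dRg. auto_derive; [lra|]. field. lra.
Qed.

Lemma Rg_bounds a b y : 0 < a -> 0 < b -> 0 <= Rg a b y <= / b.
Proof.
  intros Ha Hb. assert (HN : 0 < a + b * y ^ 2) by (assert (0 <= y^2) by apply pow2_ge_0; nra).
  assert (E : Rg a b y = / b - a / (b * (a + b * y ^ 2))) by (unfold Rg; field; lra).
  assert (0 < a / (b * (a + b * y ^ 2))) by (apply Rdiv_lt_0_compat; nra).
  split; [|lra].
  unfold Rg. apply Rmult_le_pos; [apply pow2_ge_0 | apply Rlt_le, Rinv_0_lt_compat; auto].
Qed.

Lemma dRg_Rg_bound a b y : 0 < a -> 0 < b -> 0 < y ->
  0 <= dRg a b y * Rg a b y <= / (2 * b ^ 2 * y).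
Proof.
  intros Ha Hb Hy.
  assert (Hy2 : 0 < y ^ 2) by (apply pow_lt; auto).
  assert (Hby : 0 < b * y ^ 2) by (apply Rmult_lt_0_compat; auto).
  assert (HN : 0 < a + b * y ^ 2) by lra.
  assert (Hy3 : 0 < y ^ 3) by (apply pow_lt; auto).
  assert (HN3 : 0 < (a + b * y ^ 2) ^ 3) by (apply pow_lt; auto).
  assert (Hb2 : 0 < 2 * b ^ 2 * y) by (apply Rmult_lt_0_compat; [apply Rmult_lt_0_compat; [lra | apply pow_lt; auto] | auto]).
  unfold dRg, Rg.
  replace (2 * a * y / (a + b * y ^ 2) ^ 2 * (y ^ 2 / (a + b * y ^ 2)))
    with ((4 * a * b ^ 2 * y ^ 4 / (a + b * y ^ 2) ^ 3) * / (2 * b ^ 2 * y)) by (field; lra).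
  assert (HK : 4 * a * b ^ 2 * y ^ 4 <= (a + b * y ^ 2) ^ 3).
  { assert (H1 : 4 * a * (b * y ^ 2) <= (a + b * y ^ 2) ^ 2).
    { assert (E : (a + b * y ^ 2) ^ 2 = (a - b * y ^ 2) ^ 2 + 4 * a * (b * y ^ 2)) by ring.
      assert (0 <= (a - b * y ^ 2) ^ 2) by apply pow2_ge_0. lra. }
    replace (4 * a * b ^ 2 * y ^ 4) with ((4 * a * (b * y ^ 2)) * (b * y ^ 2)) by ring.
    replace ((a + b * y ^ 2) ^ 3) with ((a + b * y ^ 2) ^ 2 * (a + b * y ^ 2)) by ring.
    apply Rmult_le_compat; try lra. apply Rmult_le_pos; lra. }
  assert (H0 : 0 <= 4 * a * b ^ 2 * y ^ 4 / (a + b * y ^ 2) ^ 3).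
  { apply Rmult_le_pos; [| apply Rlt_le, Rinv_0_lt_compat; auto].
    apply Rmult_le_pos; [| apply pow_le; lra]. apply Rmult_le_pos; [lra | apply pow_le; lra]. }
  assert (H1 : 4 * a * b ^ 2 * y ^ 4 / (a + b * y ^ 2) ^ 3 <= 1).
  { apply Rmult_le_reg_r with ((a + b * y ^ 2) ^ 3); auto. unfold Rdiv.
    rewrite Rmult_assoc, Rinv_l by lra. lra. }
  assert (Hi : 0 < / (2 * b ^ 2 * y)) by (apply Rinv_0_lt_compat; auto).
  split; [apply Rmult_le_pos; lra|]. 
  rewrite <- (Rmult_1_l (/ (2 * b ^ 2 * y))) at 2. apply Rmult_le_compat_r; lra.
Qed.

Definition Pp (x : R) := x - x ^ 3 + x ^ 4 / 2.
Definition P1p (x : R) := 1 - 3 * x ^ 2 + 2 * x ^ 3.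
Definition P2p (x : R) := - 6 * x + 6 * x ^ 2.

Definition ph (tm L : R) := glue tm (fun t => t)
  (glue (tm + L) (fun t => tm + L * Pp ((t - tm) / L)) (fun _ => tm + L / 2)).
Definition dph (tm L : R) := glue tm (fun _ => 1)
  (glue (tm + L) (fun t => P1p ((t - tm) / L)) (fun _ => 0)).
Definition ddph (tm L : R) := glue tm (fun _ => 0)
  (glue (tm + L) (fun t => P2p ((t - tm) / L) / L) (fun _ => 0)).

Lemma ph_deriv tm L : 0 < L -> forall t, is_derive (ph tm L) t (dph tm L t).
Proof.
  intros HL. unfold ph, dph. apply glue_derive.
  - intros t. auto_derive; auto.
  - apply glue_derive.
    + intros t. unfold Pp. auto_derive; auto. unfold P1p. field. lra.
    + intros t. auto_derive; auto.
    + cbv beta. replace (tm + L - tm) with L by ring. unfold Pp. field. lra.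
    + cbv beta. replace (tm + L - tm) with L by ring. unfold P1p.
      replace (L / L) with 1 by (field; lra). ring.
  - cbv beta. rewrite glue_left by lra. replace (tm - tm) with 0 by ring. unfold Pp.
    unfold Rdiv; ring.
  - cbv beta. rewrite glue_left by lra. replace (tm - tm) with 0 by ring. unfold P1p.
    unfold Rdiv; ring.
Qed.

Lemma dph_deriv tm L : 0 < L -> forall t, is_derive (dph tm L) t (ddph tm L t).
Proof.
  intros HL. unfold dph, ddph. apply glue_derive.
  - intros t. auto_derive; auto.
  - apply glue_derive.
    + intros t. unfold P1p. auto_derive; auto. unfold P2p. field. lra.
    + intros t. auto_derive; auto.
    + cbv beta. replace (tm + L - tm) with L by ring. unfold P1p.
      replace (L / L) with 1 by (field; lra). ring.
    + cbv beta. replace (tm + L - tm) with L by ring. unfold P2p.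
      replace (L / L) with 1 by (field; lra). field. lra.
  - cbv beta. rewrite glue_left by lra. replace (tm - tm) with 0 by ring. unfold P1p.
    unfold Rdiv; ring.
  - cbv beta. rewrite glue_left by lra. replace (tm - tm) with 0 by ring. unfold P2p.
    unfold Rdiv; ring.
Qed.

Lemma ddph_cont tm L : 0 < L -> forall t, continuous (ddph tm L) t.
Proof.
  intros HL. unfold ddph. apply glue_cont.
  - intros; apply continuous_const.
  - apply glue_cont.
    + intros t. apply (ex_derive_continuous (K := R_AbsRing) (V := R_NormedModule)).
      unfold P2p. auto_derive; auto.
    + intros; apply continuous_const.
    + cbv beta. replace (tm + L - tm) with L by ring. unfold P2p.
      replace (L / L) with 1 by (field; lra). field. lra.
  - cbv beta. rewrite glue_left by lra. replace (tm - tm) with 0 by ring. unfold P2p.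
    unfold Rdiv; ring.
Qed.

Ltac gsimp := unfold glue; repeat match goal with |- context [Rle_dec ?a ?b] => destruct (Rle_dec a b); try (exfalso; lra) end.

Lemma ph_left tm L t : 0 < L -> t <= tm -> ph tm L t = t /\ dph tm L t = 1 /\ ddph tm L t = 0.
Proof. intros HL H. unfold ph, dph, ddph. gsimp. auto. Qed.

Lemma ph_right tm L t : 0 < L -> tm + L <= t ->
  ph tm L t = tm + L / 2 /\ dph tm L t = 0 /\ ddph tm L t = 0.
Proof.
  intros HL H. unfold ph, dph, ddph. gsimp.
  - assert (t = tm + L) by lra. subst t. replace (tm + L - tm) with L by ring.
    replace (L / L) with 1 by (field; lra). unfold Pp, P1p, P2p. split; [field|split; [ring|field; lra]].
  - auto.
Qed.

Lemma ph_mid tm L t : 0 < L -> tm < t <= tm + L ->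
  ph tm L t = tm + L * Pp ((t - tm) / L) /\ dph tm L t = P1p ((t - tm) / L) /\
  ddph tm L t = P2p ((t - tm) / L) / L.
Proof.
  intros HL H. unfold ph, dph, ddph. gsimp. auto.
Qed.

Lemma poly_bounds x : 0 <= x <= 1 ->
  0 <= Pp x <= 1 / 2 /\ 0 <= P1p x <= 1 /\ Rabs (P2p x) <= 3 / 2.
Proof.
  intros Hx. unfold Pp, P1p, P2p.
  assert (A1 : 0 <= 1 - x) by lra.
  assert (A2 : 0 <= (1 - x) ^ 3 * (1 + x)) by (apply Rmult_le_pos; [apply pow_le|]; lra).
  assert (A3 : 0 <= x * (1 - x ^ 2)) by (apply Rmult_le_pos; [lra|]; simpl; nra).
  assert (A4 : 0 <= x ^ 4) by (apply pow_le; lra).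
  assert (A5 : 0 <= (1 - x) ^ 2 * (1 + 2 * x)) by (apply Rmult_le_pos; [apply pow_le|]; lra).
  assert (A6 : 0 <= x ^ 2 * (3 - 2 * x)) by (apply Rmult_le_pos; [apply pow_le|]; lra).
  assert (A7 : 0 <= (x - 1/2) ^ 2) by apply pow2_ge_0.
  split; [split|split; [split|]].
  - assert (E : x - x ^ 3 + x ^ 4 / 2 = x * (1 - x ^ 2) + x ^ 4 / 2) by ring. lra.
  - assert (E : 1 / 2 - (x - x ^ 3 + x ^ 4 / 2) = (1 - x) ^ 3 * (1 + x) / 2) by field. lra.
  - assert (E : 1 - 3 * x ^ 2 + 2 * x ^ 3 = (1 - x) ^ 2 * (1 + 2 * x)) by ring. lra.
  - assert (E : 1 - (1 - 3 * x ^ 2 + 2 * x ^ 3) = x ^ 2 * (3 - 2 * x)) by ring. lra.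
  - apply Rabs_le.
    assert (E : -6 * x + 6 * x ^ 2 = 6 * (x - 1/2) ^ 2 - 3 / 2) by field.
    assert (E2 : 0 <= x * (1 - x)) by (apply Rmult_le_pos; lra).
    assert (E3 : -6 * x + 6 * x ^ 2 = - 6 * (x * (1 - x))) by ring.
    split; lra.
Qed.

Lemma ph_bounds tm L t : 0 < L ->
  0 <= dph tm L t <= 1 /\ Rabs (ddph tm L t) <= 3 / (2 * L) /\
  ph tm L t <= tm + L / 2 /\ (t <= tm -> ph tm L t = t) /\ (tm <= t -> tm <= ph tm L t).
Proof.
  intros HL.
  assert (H32 : 0 < 3 / (2 * L)) by (apply Rdiv_lt_0_compat; lra).
  destruct (Rle_or_lt t tm) as [H1|H1].
  - destruct (ph_left tm L t HL H1) as (E1 & E2 & E3). rewrite E1, E2, E3, Rabs_R0.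
    repeat split; intros; lra.
  - destruct (Rle_or_lt t (tm + L)) as [H2|H2].
    + destruct (ph_mid tm L t HL (conj H1 H2)) as (E1 & E2 & E3). rewrite E1, E2, E3.
      assert (Hx : 0 <= (t - tm) / L <= 1).
      { split.
        - apply Rmult_le_pos; [lra| apply Rlt_le, Rinv_0_lt_compat; lra].
        - apply Rmult_le_reg_r with L; auto. unfold Rdiv. rewrite Rmult_assoc, Rinv_l; lra. }
      destruct (poly_bounds _ Hx) as (B1 & B2 & B3).
      repeat split; try lra.
      * unfold Rdiv at 1. rewrite Rabs_mult, Rabs_inv, (Rabs_pos_eq L) by lra.
        replace (3 / (2 * L)) with ((3/2) * / L) by (field; lra).
        apply Rmult_le_compat_r; [apply Rlt_le, Rinv_0_lt_compat; lra | auto].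
      * nra.
      * intros; nra.
    + destruct (ph_right tm L t HL (Rlt_le _ _ H2)) as (E1 & E2 & E3). rewrite E1, E2, E3, Rabs_R0.
      repeat split; intros; lra.
Qed.

Lemma isd_comp (f g : R -> R) (x df dg : R) :
  is_derive f (g x) df -> is_derive g x dg -> is_derive (fun t => f (g t)) x (dg * df).
Proof. intros H1 H2. exact (is_derive_comp f g x df dg H1 H2). Qed.
Lemma isd_mult (f g : R -> R) (x df dg : R) :
  is_derive f x df -> is_derive g x dg -> is_derive (fun t => f t * g t) x (df * g x + f x * dg).
Proof. intros H1 H2. apply (is_derive_mult f g x df dg H1 H2). intros; apply Rmult_comm. Qed.
Lemma isd_plus (f g : R -> R) (x df dg : R) :
  is_derive f x df -> is_derive g x dg -> is_derive (fun t => f t + g t) x (df + dg).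
Proof. intros H1 H2. exact (is_derive_plus f g x df dg H1 H2). Qed.
Lemma isd_minus (f g : R -> R) (x df dg : R) :
  is_derive f x df -> is_derive g x dg -> is_derive (fun t => f t - g t) x (df - dg).
Proof. intros H1 H2. exact (is_derive_minus f g x df dg H1 H2). Qed.
Lemma isd_opp (f : R -> R) (x df : R) :
  is_derive f x df -> is_derive (fun t => - f t) x (- df).
Proof. intros H1. exact (is_derive_opp f x df H1). Qed.
Lemma isd_ext (f g : R -> R) (x l l' : R) : (forall t, f t = g t) -> l = l' -> is_derive f x l -> is_derive g x l'.
Proof. intros H <- H1. apply is_derive_ext with f; auto. Qed.
Lemma isd_cont (f : R -> R) (x l : R) : is_derive f x l -> continuous f x.
Proof. intros H. apply (ex_derive_continuous (K := R_AbsRing) (V := R_NormedModule)). exists l; auto. Qed.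
Lemma ct_mult (f g : R -> R) t : continuous f t -> continuous g t -> continuous (fun x => f x * g x) t.
Proof. intros H1 H2. exact (continuous_mult f g t H1 H2). Qed.
Lemma ct_plus (f g : R -> R) t : continuous f t -> continuous g t -> continuous (fun x => f x + g x) t.
Proof. intros H1 H2. exact (continuous_plus f g t H1 H2). Qed.
Lemma ct_minus (f g : R -> R) t : continuous f t -> continuous g t -> continuous (fun x => f x - g x) t.
Proof. intros H1 H2. exact (continuous_minus f g t H1 H2). Qed.
Lemma ct_const (c t : R) : continuous (fun _ => c) t.
Proof. apply continuous_const. Qed.
Lemma ct_comp (f g : R -> R) t : continuous g t -> continuous f (g t) -> continuous (fun x => f (g x)) t.
Proof. intros H1 H2. exact (continuous_comp g f t H1 H2). Qed.

Definition tau mu k := atan (y3 mu k / om mu) / om mu.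
Definition c0 mu k := tau mu k + aP mu k / y3 mu k - bP mu k * y3 mu k.
Definition Yf mu k s := Yg (aP mu k) (bP mu k) (c0 mu k) s.
Definition Rf mu k y := Rg (aP mu k) (bP mu k) y.
Definition dRf mu k y := dRg (aP mu k) (bP mu k) y.
Definition sk mu k := c0 mu k - aP mu k / k + bP mu k * k.
Definition LL := 1 / 10.
Definition tm mu k := sk mu k - LL / 2.
Definition tz mu k := tm mu k + LL.
Definition phi mu k := ph (tm mu k) LL.
Definition dphi mu k := dph (tm mu k) LL.
Definition ddphi mu k := ddph (tm mu k) LL.
Definition yr mu k t := Yf mu k (phi mu k t).
Definition qf mu k t := yr mu k t ^ 2 - Rf mu k (yr mu k t) * dphi mu k t.
Definition dq mu k t :=
  2 * yr mu k t * (dphi mu k t * Rf mu k (yr mu k t))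
  - (dphi mu k t * Rf mu k (yr mu k t) * dRf mu k (yr mu k t) * dphi mu k t
     + Rf mu k (yr mu k t) * ddphi mu k t).

Lemma LL_pos : 0 < LL. Proof. unfold LL; lra. Qed.

Lemma yr_deriv mu k t : HypMK mu k -> is_derive (yr mu k) t (dphi mu k t * Rf mu k (yr mu k t)).
Proof.
  intros H. destruct (params mu k H) as (_&_&_&_&_&_&_&_&_&Ha&_&_&Hb).
  unfold yr, Yf, Rf. apply isd_comp.
  - apply Yg_deriv; auto.
  - apply ph_deriv, LL_pos.
Qed.

Lemma qf_deriv mu k t : HypMK mu k -> is_derive (qf mu k) t (dq mu k t).
Proof.
  intros H. destruct (params mu k H) as (_&_&_&_&_&_&_&_&_&Ha&_&_&Hb).
  assert (HR : is_derive (fun t => Rf mu k (yr mu k t)) t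
                 ((dphi mu k t * Rf mu k (yr mu k t)) * dRf mu k (yr mu k t))).
  { apply isd_comp; [unfold Rf, dRf; apply Rg_deriv; auto | apply (yr_deriv mu k t H)]. }
  assert (HD := dph_deriv (tm mu k) LL LL_pos t).
  assert (HY := yr_deriv mu k t H).
  unfold qf, dq.
  apply isd_minus.
  - apply isd_ext with (f := fun t => yr mu k t * yr mu k t)
      (l := dphi mu k t * Rf mu k (yr mu k t) * yr mu k t + yr mu k t * (dphi mu k t * Rf mu k (yr mu k t))).
    + intros; simpl; ring.
    + ring.
    + apply (isd_mult (yr mu k) (yr mu k)); [exact HY | exact HY].
  - apply isd_ext with (f := fun t => Rf mu k (yr mu k t) * dphi mu k t)
      (l := (dphi mu k t * Rf mu k (yr mu k t)) * dRf mu k (yr mu k t) * dphi mu k t + Rf mu k (yr mu k t) * ddph (tm mu k) LL t).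
    + intros; reflexivity.
    + unfold ddphi. ring.
    + apply (isd_mult (fun t => Rf mu k (yr mu k t)) (dphi mu k)); [exact HR | exact HD].
Qed.

Lemma yr_cont mu k t : HypMK mu k -> continuous (yr mu k) t.
Proof. intros H. eapply isd_cont, yr_deriv; auto. Qed.

Lemma dq_cont mu k t : HypMK mu k -> continuous (dq mu k) t.
Proof.
  intros H. destruct (params mu k H) as (_&_&_&_&_&_&_&_&_&Ha&_&_&Hb).
  assert (Hy := yr_cont mu k t H).
  assert (Hd : continuous (dphi mu k) t) by (eapply isd_cont, dph_deriv, LL_pos).
  assert (Hdd : continuous (ddphi mu k) t) by (apply ddph_cont, LL_pos).
  assert (HR : continuous (fun t => Rf mu k (yr mu k t)) t).
  { apply ct_comp; auto. eapply isd_cont. unfold Rf. apply Rg_deriv; auto. }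
  assert (HdR : continuous (fun t => dRf mu k (yr mu k t)) t).
  { apply ct_comp; auto. eapply isd_cont. unfold dRf, dRg.
    assert (0 < aP mu k + bP mu k * yr mu k t ^ 2) by (assert (0 <= yr mu k t ^ 2) by apply pow2_ge_0; nra).
    auto_derive. apply Rgt_not_eq. simpl in H0 |- *. nra. reflexivity. }
  unfold dq.
  apply (ct_minus (fun t => 2 * yr mu k t * (dphi mu k t * Rf mu k (yr mu k t)))
    (fun t => dphi mu k t * Rf mu k (yr mu k t) * dRf mu k (yr mu k t) * dphi mu k t +
     Rf mu k (yr mu k t) * ddphi mu k t)).
  - apply (ct_mult (fun t => 2 * yr mu k t) (fun t => dphi mu k t * Rf mu k (yr mu k t))).
    + apply (ct_mult (fun _ => 2) (yr mu k)); [apply ct_const | auto].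
    + apply (ct_mult (dphi mu k) (fun t => Rf mu k (yr mu k t))); auto.
  - apply (ct_plus (fun t => dphi mu k t * Rf mu k (yr mu k t) * dRf mu k (yr mu k t) * dphi mu k t)
      (fun t => Rf mu k (yr mu k t) * ddphi mu k t)).
    + apply (ct_mult (fun t => dphi mu k t * Rf mu k (yr mu k t) * dRf mu k (yr mu k t)) (dphi mu k)); auto.
      apply (ct_mult (fun t => dphi mu k t * Rf mu k (yr mu k t)) (fun t => dRf mu k (yr mu k t))); auto.
      apply (ct_mult (dphi mu k) (fun t => Rf mu k (yr mu k t))); auto.
    + apply (ct_mult (fun t => Rf mu k (yr mu k t)) (ddphi mu k)); auto.
Qed.

Lemma tau_facts mu k : HypMK mu k ->
  om mu * tau mu k = atan (y3 mu k / om mu) /\ 0 < tau mu k /\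
  0 < cos (om mu * tau mu k) /\ sin (om mu * tau mu k) = y3 mu k / om mu * cos (om mu * tau mu k).
Proof.
  intros H. destruct (params mu k H) as (Ho&_&_&_&Hy&_).
  assert (E : om mu * tau mu k = atan (y3 mu k / om mu)) by (unfold tau; field; lra).
  assert (Hat : 0 < atan (y3 mu k / om mu)).
  { rewrite <- atan_0. apply atan_increasing. apply Rdiv_lt_0_compat; auto. }
  destruct (atan_bound (y3 mu k / om mu)) as [B1 B2].
  assert (Hc : 0 < cos (om mu * tau mu k)) by (rewrite E; apply cos_gt_0; lra).
  split; [auto|split; [|split; [auto|]]].
  - unfold tau. apply Rdiv_lt_0_compat; auto.
  - assert (Ht : tan (om mu * tau mu k) = y3 mu k / om mu) by (rewrite E; apply tan_atan).
    unfold tan in Ht. rewrite <- Ht. field. lra.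
Qed.

Lemma Yf_at mu k y : HypMK mu k -> 0 < y -> Yf mu k (c0 mu k - aP mu k / y + bP mu k * y) = y.
Proof.
  intros H Hy. destruct (params mu k H) as (_&_&_&_&_&_&_&_&_&Ha&_&_&Hb).
  unfold Yf. apply Yg_inv; auto.
Qed.

Lemma Yf_tau mu k : HypMK mu k -> Yf mu k (tau mu k) = y3 mu k.
Proof.
  intros H. destruct (params mu k H) as (_&_&_&_&Hy&_).
  rewrite <- (Yf_at mu k (y3 mu k)) by auto. f_equal. unfold c0. ring.
Qed.

Lemma Yf_sk mu k : HypMK mu k -> Yf mu k (sk mu k) = k.
Proof.
  intros H. assert (0 < k) by (destruct H as (_&_&Hk&_); lra).
  unfold sk. apply Yf_at; auto.
Qed.

Lemma Yf_mono mu k s1 s2 : HypMK mu k -> s1 <= s2 -> Yf mu k s1 <= Yf mu k s2.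
Proof.
  intros H Hs. destruct (params mu k H) as (_&_&_&_&_&_&_&_&_&Ha&_&_&Hb).
  unfold Yf. apply Yg_mono; auto.
Qed.

Lemma Yf_pos mu k s : HypMK mu k -> 0 < Yf mu k s.
Proof.
  intros H. destruct (params mu k H) as (_&_&_&_&_&_&_&_&_&Ha&_&_&Hb).
  unfold Yf. apply (Yg_facts _ _ _ s Ha Hb).
Qed.

Lemma timing mu k : HypMK mu k ->
  tau mu k <= tm mu k /\ 0 < tz mu k - tau mu k /\ tz mu k - tau mu k <= 2 / 5 /\
  tm mu k + LL / 2 = sk mu k /\ tz mu k = tm mu k + LL.
Proof.
  intros H. destruct (params mu k H) as (Ho&Ho2&HE&HEY&Hy&Hy2&Hy10&HbP&Hab&Ha&Ha1&Hyk&Hb).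
  assert (Hk : 50 <= k) by (destruct H as (_&_&Hk&_); auto).
  assert (E1 : tm mu k - tau mu k = aP mu k / y3 mu k - bP mu k * y3 mu k - aP mu k / k + bP mu k * k - LL / 2)
    by (unfold tm, sk, c0; ring).
  assert (Hbk : bP mu k * k = 1 / 4) by (rewrite HbP; field; lra).
  assert (Hby : bP mu k * y3 mu k <= 1 / 5).
  { rewrite HbP. apply Rmult_le_reg_l with (4 * k); [lra|].
    rewrite <- Rmult_assoc, Rinv_r by lra. lra. }
  assert (Hby0 : 0 <= bP mu k * y3 mu k) by nra.
  assert (Hay : aP mu k / k <= aP mu k / y3 mu k).
  { unfold Rdiv. apply Rmult_le_compat_l; [lra|]. apply Rinv_le_contravar; lra. }
  assert (Hay2 : aP mu k / y3 mu k <= 1 / 10).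
  { apply Rmult_le_reg_r with (y3 mu k); auto. unfold Rdiv. rewrite Rmult_assoc, Rinv_l by lra. lra. }
  assert (Hak : 0 <= aP mu k / k) by (apply Rmult_le_pos; [lra| apply Rlt_le, Rinv_0_lt_compat; lra]).
  unfold LL in *.
  repeat split.
  - lra.
  - unfold tz, LL. lra.
  - unfold tz, LL. lra.
  - unfold tm, LL. ring.
Qed.

Lemma Rf_y3 mu k : HypMK mu k ->
  Rf mu k (y3 mu k) = y3 mu k ^ 2 + om mu ^ 2 /\ dRf mu k (y3 mu k) = 2 * y3 mu k.
Proof.
  intros H. destruct (params mu k H) as (Ho&Ho2&HE&HEY&Hy&Hy2&Hy10&HbP&Hab&Ha&Ha1&Hyk&Hb).
  assert (HY : 0 < Y3s mu k) by (rewrite <- Hy2; apply pow_lt; auto).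
  unfold Rf, dRf, Rg, dRg. rewrite Hab. split.
  - rewrite Hy2, HEY. field. lra.
  - unfold aP. field. split; lra.
Qed.

Lemma qG_bound mu k y : HypMK mu k -> - om mu ^ 2 <= y ^ 2 - Rf mu k y.
Proof.
  intros H. destruct (params mu k H) as (Ho&Ho2&HE&HEY&Hy&Hy2&Hy10&HbP&Hab&Ha&Ha1&Hyk&Hb).
  assert (HN : 0 < aP mu k + bP mu k * y ^ 2) by (assert (0 <= y ^ 2) by apply pow2_ge_0; nra).
  assert (E : y ^ 2 - Rf mu k y + om mu ^ 2 =
              bP mu k * (y ^ 2 - Y3s mu k) ^ 2 / (aP mu k + bP mu k * y ^ 2)).
  { unfold Rf, Rg. field_simplify_eq; [|lra].
    unfold aP, bP. rewrite HEY. field. lra. }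
  assert (0 <= bP mu k * (y ^ 2 - Y3s mu k) ^ 2 / (aP mu k + bP mu k * y ^ 2)).
  { apply Rmult_le_pos; [apply Rmult_le_pos; [lra|apply pow2_ge_0]| apply Rlt_le, Rinv_0_lt_compat; auto]. }
  lra.
Qed.

Definition FF mu k t := - RInt (yr mu k) (tz mu k) t.
Definition alpha mu k := exp (FF mu k (tau mu k)) / cos (om mu * tau mu k).
Definition gg mu k := glue (tau mu k) (fun t => alpha mu k * cos (om mu * t)) (fun t => exp (FF mu k t)).
Definition dgg mu k := glue (tau mu k) (fun t => - (alpha mu k * om mu * sin (om mu * t)))
  (fun t => - yr mu k t * exp (FF mu k t)).
Definition ddgg mu k := glue (tau mu k) (fun t => - (alpha mu k * om mu ^ 2 * cos (om mu * t)))
  (fun t => qf mu k t * exp (FF mu k t)).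
Definition aa mu k := glue (tau mu k) (fun _ => mu / (2 * k ^ 2)) (fun t => (qf mu k t + mu) / k ^ 2).
Definition daa mu k := glue (tau mu k) (fun _ => 0) (fun t => dq mu k t / k ^ 2).

Lemma at_tau mu k : HypMK mu k ->
  yr mu k (tau mu k) = y3 mu k /\ dphi mu k (tau mu k) = 1 /\ ddphi mu k (tau mu k) = 0 /\
  qf mu k (tau mu k) = - om mu ^ 2 /\ dq mu k (tau mu k) = 0.
Proof.
  intros H. destruct (timing mu k H) as (Htm & _).
  destruct (ph_left (tm mu k) LL (tau mu k) LL_pos Htm) as (E1 & E2 & E3).
  assert (Hy : yr mu k (tau mu k) = y3 mu k) by (unfold yr, phi; rewrite E1; apply Yf_tau; auto).
  destruct (Rf_y3 mu k H) as (R1 & R2).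
  unfold dphi, ddphi. rewrite E2, E3.
  split; [auto|split; [auto|split; [auto|split]]].
  - unfold qf. rewrite Hy. unfold dphi. rewrite E2, R1. ring.
  - unfold dq. rewrite Hy. unfold dphi, ddphi. rewrite E2, E3, R2. ring.
Qed.

Lemma FF_deriv mu k t : HypMK mu k -> is_derive (FF mu k) t (- yr mu k t).
Proof.
  intros H. unfold FF. apply isd_opp.
  apply (is_derive_RInt (yr mu k) (RInt (yr mu k) (tz mu k)) (tz mu k) t).
  - apply filter_forall. intros b. apply (RInt_correct (V := R_CompleteNormedModule)).
    apply (ex_RInt_continuous (V := R_CompleteNormedModule)). intros; apply yr_cont; auto.
  - apply yr_cont; auto.
Qed.

Lemma gg_deriv mu k t : HypMK mu k -> is_derive (gg mu k) t (dgg mu k t).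
Proof.
  intros H. destruct (tau_facts mu k H) as (Et & _ & Hc & Hs).
  destruct (at_tau mu k H) as (Y1 & _).
  destruct (params mu k H) as (Ho&_).
  unfold gg, dgg. apply glue_derive.
  - intros s. auto_derive; auto. ring.
  - intros s. apply isd_ext with (f := fun t => exp (FF mu k t)) (l := - yr mu k s * exp (FF mu k s)).
    + reflexivity.
    + reflexivity.
    + apply isd_ext with (f := fun t => exp (FF mu k t)) (l := (- yr mu k s) * exp (FF mu k s)); auto.
      apply (isd_comp exp (FF mu k)); [apply is_derive_exp | apply FF_deriv; auto].
  - cbv beta. unfold alpha. field. lra.
  - cbv beta. unfold alpha. rewrite Y1, Hs. field. split; lra.
Qed.

Lemma dgg_deriv mu k t : HypMK mu k -> is_derive (dgg mu k) t (ddgg mu k t).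
Proof.
  intros H. destruct (tau_facts mu k H) as (Et & _ & Hc & Hs).
  destruct (at_tau mu k H) as (Y1 & D1 & _ & Q1 & _).
  destruct (params mu k H) as (Ho&_).
  unfold dgg, ddgg. apply glue_derive.
  - intros s. auto_derive; auto. ring.
  - intros s. apply isd_ext with (f := fun t => - yr mu k t * exp (FF mu k t))
      (l := (- (dphi mu k s * Rf mu k (yr mu k s))) * exp (FF mu k s) + (- yr mu k s) * ((- yr mu k s) * exp (FF mu k s))).
    + reflexivity.
    + unfold qf. ring.
    + apply (isd_mult (fun t => - yr mu k t) (fun t => exp (FF mu k t))).
      * apply isd_opp. apply yr_deriv; auto.
      * apply (isd_comp exp (FF mu k)); [apply is_derive_exp | apply FF_deriv; auto].
  - cbv beta. unfold alpha. rewrite Y1, Hs. field. split; lra.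
  - cbv beta. unfold alpha. rewrite Q1. field. lra.
Qed.

Lemma ddgg_cont mu k t : HypMK mu k -> continuous (ddgg mu k) t.
Proof.
  intros H. destruct (tau_facts mu k H) as (Et & _ & Hc & Hs).
  destruct (at_tau mu k H) as (Y1 & D1 & _ & Q1 & _).
  unfold ddgg. apply glue_cont.
  - intros s. eapply isd_cont. auto_derive; auto.
  - intros s. apply (ct_mult (qf mu k) (fun t => exp (FF mu k t))).
    + eapply isd_cont. apply qf_deriv; auto.
    + eapply isd_cont. apply (isd_comp exp (FF mu k)); [apply is_derive_exp | apply FF_deriv; auto].
  - cbv beta. unfold alpha. rewrite Q1. field. lra.
Qed.

Lemma aa_deriv mu k t : HypMK mu k -> is_derive (aa mu k) t (daa mu k t).
Proof.
  intros H. destruct (at_tau mu k H) as (Y1 & D1 & _ & Q1 & DQ1).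
  destruct (params mu k H) as (Ho&Ho2&_).
  assert (Hk : 0 < k) by (destruct H as (_&_&Hk&_); lra).
  unfold aa, daa. apply glue_derive.
  - intros s. auto_derive; auto.
  - intros s. apply isd_ext with (f := fun t => (qf mu k t + mu) * / k ^ 2) (l := (dq mu k s + 0) * / k ^ 2 + (qf mu k s + mu) * 0).
    + intros; reflexivity.
    + field. lra.
    + apply (isd_mult (fun t => qf mu k t + mu) (fun _ => / k ^ 2)).
      * apply isd_plus; [apply qf_deriv; auto | auto_derive; auto].
      * auto_derive; auto.
  - cbv beta. rewrite Q1, Ho2. field. lra.
  - cbv beta. rewrite DQ1. field. lra.
Qed.

Lemma daa_cont mu k t : HypMK mu k -> continuous (daa mu k) t.
Proof.
  intros H. destruct (at_tau mu k H) as (Y1 & D1 & _ & Q1 & DQ1).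
  assert (Hk : 0 < k) by (destruct H as (_&_&Hk&_); lra).
  unfold daa. apply glue_cont.
  - intros; apply ct_const.
  - intros s. apply (ct_mult (dq mu k) (fun _ => / k ^ 2)); [apply dq_cont; auto | apply ct_const].
  - cbv beta. rewrite DQ1. field. lra.
Qed.

Lemma yr_range mu k t : HypMK mu k ->
  0 < yr mu k t /\ yr mu k t <= k /\ (tau mu k <= t -> y3 mu k <= yr mu k t).
Proof.
  intros H. destruct (timing mu k H) as (Htm & _ & _ & Hsk & _).
  destruct (ph_bounds (tm mu k) LL t LL_pos) as (_ & _ & B3 & B4 & B5).
  split; [apply Yf_pos; auto|split].
  - apply Rle_trans with (Yf mu k (sk mu k)); [|rewrite Yf_sk; auto; lra].
    unfold yr. apply Yf_mono; auto. unfold phi. lra.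
  - intros Ht. apply Rle_trans with (Yf mu k (tau mu k)); [rewrite Yf_tau; auto; lra|].
    unfold yr. apply Yf_mono; auto. unfold phi.
    destruct (Rle_or_lt t (tm mu k)) as [h|h].
    + rewrite B4; auto.
    + specialize (B5 (Rlt_le _ _ h)). lra.
Qed.

Lemma aa_bounds mu k t : HypMK mu k -> mu / (2 * k ^ 2) <= aa mu k t <= 1 + mu / k ^ 2.
Proof.
  intros H. destruct (params mu k H) as (Ho&Ho2&HE&HEY&Hy&Hy2&Hy10&HbP&Hab&Ha&Ha1&Hyk&Hb).
  assert (Hk : 50 <= k) by (destruct H as (_&_&Hk&_); auto).
  assert (Hmu : 0 < mu) by (destruct H; auto).
  assert (Hk2 : 0 < k ^ 2) by (apply pow_lt; lra).
  unfold aa, glue. destruct (Rle_dec t (tau mu k)).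
  - split; [lra|]. assert (mu / (2 * k ^ 2) <= mu / k ^ 2).
    { unfold Rdiv. apply Rmult_le_compat_l; [lra|]. apply Rinv_le_contravar; lra. } lra.
  - destruct (yr_range mu k t H) as (Y0 & Yk & _).
    destruct (ph_bounds (tm mu k) LL t LL_pos) as ((D0 & D1) & _).
    fold (dphi mu k t) in D0, D1.
    destruct (Rg_bounds (aP mu k) (bP mu k) (yr mu k t) Ha Hb) as (R0 & R1).
    fold (Rf mu k (yr mu k t)) in R0, R1.
    assert (Q1 := qG_bound mu k (yr mu k t) H).
    assert (Hq1 : - om mu ^ 2 <= qf mu k t) by (unfold qf; nra).
    assert (Hq2 : qf mu k t <= k ^ 2).
    { unfold qf. assert (yr mu k t ^ 2 <= k ^ 2) by (apply pow_incr; lra). nra. }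
    split.
    + apply Rmult_le_reg_r with (k ^ 2); auto. unfold Rdiv.
      rewrite !Rmult_assoc, Rinv_l by lra. replace (mu * (/ (2 * k ^ 2) * k ^ 2)) with (mu / 2) by (field; lra). lra.
    + apply Rmult_le_reg_r with (k ^ 2); auto. unfold Rdiv.
      rewrite Rmult_assoc, Rinv_l by lra. replace ((1 + mu * / k ^ 2) * k ^ 2) with (k ^ 2 + mu) by (field; lra). lra.
Qed.

Lemma daa_bound mu k t : HypMK mu k -> Rabs (daa mu k t) <= 10.
Proof.
  intros H. destruct (params mu k H) as (Ho&Ho2&HE&HEY&Hy&Hy2&Hy10&HbP&Hab&Ha&Ha1&Hyk&Hb).
  assert (Hk : 50 <= k) by (destruct H as (_&_&Hk&_); auto).
  assert (Hk2 : 0 < k ^ 2) by (apply pow_lt; lra).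
  unfold daa, glue. destruct (Rle_dec t (tau mu k)).
  - rewrite Rabs_R0; lra.
  - destruct (yr_range mu k t H) as (Y0 & Yk & Y3).
    assert (Yt : y3 mu k <= yr mu k t) by (apply Y3; lra).
    destruct (ph_bounds (tm mu k) LL t LL_pos) as ((D0 & D1) & DD & _).
    fold (dphi mu k t) in D0, D1. fold (ddphi mu k t) in DD.
    replace (3 / (2 * LL)) with 15 in DD by (unfold LL; field).
    destruct (Rg_bounds (aP mu k) (bP mu k) (yr mu k t) Ha Hb) as (R0 & R1).
    fold (Rf mu k (yr mu k t)) in R0, R1.
    destruct (dRg_Rg_bound (aP mu k) (bP mu k) (yr mu k t) Ha Hb Y0) as (S0 & S1).
    fold (dRf mu k (yr mu k t)) (Rf mu k (yr mu k t)) in S0, S1.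
    assert (Hib : / bP mu k = 4 * k) by (rewrite HbP; field; lra).
    rewrite Hib in R1.
    assert (HS : / (2 * bP mu k ^ 2 * yr mu k t) = 8 * k ^ 2 / yr mu k t)
      by (rewrite HbP; field; split; lra).
    rewrite HS in S1.
    assert (S2 : 8 * k ^ 2 / yr mu k t <= 8 * k ^ 2 / 10).
    { unfold Rdiv. apply Rmult_le_compat_l; [lra|]. apply Rinv_le_contravar; lra. }
    set (y := yr mu k t) in *. set (d := dphi mu k t) in *. set (dd := ddphi mu k t) in *.
    set (R := Rf mu k y) in *. set (D := dRf mu k y) in *.
    assert (T1 : 0 <= 2 * y * (d * R) <= 8 * k ^ 2).
    { split. apply Rmult_le_pos; [lra| apply Rmult_le_pos; lra].
      assert (d * R <= 4 * k) by (apply Rle_trans with (1 * R); [apply Rmult_le_compat_r; lra|lra]).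
      assert (0 <= d * R) by (apply Rmult_le_pos; lra).
      assert (y * (d * R) <= k * (4 * k)) by (apply Rmult_le_compat; lra). nra. }
    assert (T2 : 0 <= d * R * D * d <= 8 * k ^ 2 / 10).
    { replace (d * R * D * d) with ((d * d) * (D * R)) by ring.
      assert (0 <= d * d <= 1) by (split; nra).
      split; [apply Rmult_le_pos; lra|].
      apply Rle_trans with (1 * (D * R)); [apply Rmult_le_compat_r; lra|lra]. }
    assert (T3 : Rabs (R * dd) <= 60 * k).
    { rewrite Rabs_mult, (Rabs_pos_eq R) by lra.
      apply Rle_trans with (4 * k * 15); [apply Rmult_le_compat; try lra; apply Rabs_pos|lra]. }
    assert (Hdq : Rabs (dq mu k t) <= 8 * k ^ 2 + 8 * k ^ 2 / 10 + 60 * k).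
    { unfold dq. fold y d dd. fold R D.
      replace (2 * y * (d * R) - (d * R * D * d + R * dd)) with (2 * y * (d * R) - d * R * D * d - R * dd) by ring.
      apply Rle_trans with (Rabs (2 * y * (d * R) - d * R * D * d) + Rabs (R * dd)).
      - unfold Rminus at 1. apply Rle_trans with (1 := Rabs_triang _ _). rewrite Rabs_Ropp. lra.
      - apply Rplus_le_compat; [|auto]. apply Rabs_le. split; lra. }
    unfold Rdiv. rewrite Rabs_mult, (Rabs_pos_eq (/ k ^ 2)) by (apply Rlt_le, Rinv_0_lt_compat; auto).
    apply Rmult_le_reg_r with (k ^ 2); auto. rewrite Rmult_assoc, Rinv_l by lra.
    assert (60 * k <= 12 / 10 * k ^ 2) by (simpl; nra). lra.
Qed.

Lemma ode mu k t : HypMK mu k -> ddgg mu k t = (k ^ 2 * aa mu k t - mu) * gg mu k t.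
Proof.
  intros H. destruct (params mu k H) as (Ho&Ho2&_).
  assert (Hk : 50 <= k) by (destruct H as (_&_&Hk&_); auto).
  unfold ddgg, aa, gg, glue. destruct (Rle_dec t (tau mu k)).
  - rewrite Ho2. field. lra.
  - field. lra.
Qed.

Lemma region_left mu k t : HypMK mu k -> t <= tau mu k ->
  aa mu k t = mu / (2 * k ^ 2) /\ gg mu k t = alpha mu k * cos (om mu * t).
Proof. intros H Ht. unfold aa, gg. rewrite !glue_left by auto. auto. Qed.

Lemma region_right mu k t : HypMK mu k -> tz mu k <= t ->
  aa mu k t = 1 + mu / k ^ 2 /\ gg mu k t = exp (- k * (t - tz mu k)).
Proof.
  intros H Ht. destruct (timing mu k H) as (Htm & HC & _ & Hsk & Ht0).
  assert (Hk : 50 <= k) by (destruct H as (_&_&Hk&_); auto).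
  assert (Hyk : forall s, tz mu k <= s -> yr mu k s = k).
  { intros s Hs. unfold yr, phi. destruct (ph_right (tm mu k) LL s LL_pos) as (E1 & _); [lra|].
    rewrite E1, Hsk. apply Yf_sk; auto. }
  assert (Hdk : forall s, tz mu k <= s -> dphi mu k s = 0).
  { intros s Hs. unfold dphi. destruct (ph_right (tm mu k) LL s LL_pos) as (_ & E2 & _); [lra|]. auto. }
  unfold aa, gg. rewrite !glue_right by lra. split.
  - unfold qf. rewrite Hyk, Hdk by lra. field. lra.
  - f_equal. unfold FF. rewrite (RInt_ext (yr mu k) (fun _ => k)).
    + rewrite RInt_const. unfold scal; simpl. unfold mult; simpl. ring.
    + intros x Hx. apply Hyk. rewrite Rmin_left in Hx by lra. lra.
Qed.

Lemma Dg mu k : HypMK mu k -> Derive (gg mu k) = dgg mu k.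
Proof. intros H. apply functional_extensionality; intro t. apply is_derive_unique, gg_deriv; auto. Qed.
Lemma DDg mu k : HypMK mu k -> Derive (dgg mu k) = ddgg mu k.
Proof. intros H. apply functional_extensionality; intro t. apply is_derive_unique, dgg_deriv; auto. Qed.
Lemma Da mu k : HypMK mu k -> Derive (aa mu k) = daa mu k.
Proof. intros H. apply functional_extensionality; intro t. apply is_derive_unique, aa_deriv; auto. Qed.

Lemma Dp kr : Derive (fun x => cos (kr * x)) = (fun x => - kr * sin (kr * x)).
Proof. apply functional_extensionality; intro x. apply is_derive_unique. auto_derive; auto. ring. Qed.
Lemma DDp kr : Derive (fun x => - kr * sin (kr * x)) = (fun x => - kr ^ 2 * cos (kr * x)).
Proof. apply functional_extensionality; intro x. apply is_derive_unique. auto_derive; auto. ring. Qed.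

Lemma C1f_cos kr : C1f (fun x => cos (kr * x)).
Proof.
  split; [intros; auto_derive; auto|]. rewrite Dp. intros x.
  eapply isd_cont. auto_derive; auto.
Qed.
Lemma C1f_dcos kr : C1f (Derive (fun x => cos (kr * x))).
Proof.
  rewrite Dp. split; [intros; auto_derive; auto|]. rewrite DDp. intros x.
  eapply isd_cont. auto_derive; auto.
Qed.
Lemma C1f_gg mu k : HypMK mu k -> C1f (gg mu k).
Proof.
  intros H. split; [intros t; exists (dgg mu k t); apply gg_deriv; auto|].
  rewrite Dg by auto. intros t. eapply isd_cont, dgg_deriv; auto.
Qed.
Lemma C1f_dgg mu k : HypMK mu k -> C1f (Derive (gg mu k)).
Proof.
  intros H. rewrite Dg by auto. split; [intros t; exists (ddgg mu k t); apply dgg_deriv; auto|].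
  rewrite DDg by auto. intros t. apply ddgg_cont; auto.
Qed.
Lemma C1f_aa mu k : HypMK mu k -> C1f (aa mu k).
Proof.
  intros H. split; [intros t; exists (daa mu k t); apply aa_deriv; auto|].
  rewrite Da by auto. intros t. apply daa_cont; auto.
Qed.

Definition Amat (a : R -> R) (b : R) : matfn := fun i j =>
  match i, j with
  | IX, IX => sep (fun _ => 1) a
  | IY, IY => sep (fun _ => 1) (fun _ => b)
  | _, _ => sep (fun _ => 1) (fun _ => 0)
  end.

Lemma K_exists mu : 0 < mu -> exists K : nat, forall k : nat, (K <= k)%nat -> HypMK mu (INR k).
Proof.
  intros Hmu. assert (Ho := om_pos mu Hmu). assert (Ho2 := om_sq mu Hmu).
  set (M1 := (100 + om mu ^ 2) / (2 * om mu)).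
  assert (HM1 : 0 < M1) by (unfold M1; apply Rdiv_lt_0_compat; nra).
  destruct (INR_archimed 1 (50 + mu + 4 * om mu + M1 ^ 2)) as [K HK]; [lra|].
  exists K. intros k Hk. apply le_INR in Hk.
  set (kr := INR k) in *. rewrite Rmult_1_r in HK.
  assert (HM2 : 0 <= M1 ^ 2) by apply pow2_ge_0.
  assert (Hkr : 50 + mu + 4 * om mu + M1 ^ 2 < kr) by lra.
  split; [auto|split; [|split; [lra|split; [nra|lra]]]].
  assert (Hs : M1 <= sqrt kr).
  { rewrite <- (sqrt_pow2 M1) by lra. apply sqrt_le_1; lra. }
  unfold Y3s, Ee. 
  assert (2 * om mu * M1 = 100 + om mu ^ 2) by (unfold M1; field; lra).
  nra.
Qed.

Lemma Dexp (c z : R) : Derive (fun t => exp (- c * (t - z))) = (fun t => - c * exp (- c * (t - z))).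
Proof. apply functional_extensionality; intro x. apply is_derive_unique. auto_derive; auto. unfold Rminus. ring. Qed.
Lemma DDexp (c z t : R) : Derive (fun t => - c * exp (- c * (t - z))) t = c ^ 2 * exp (- c * (t - z)).
Proof. apply is_derive_unique. auto_derive; auto. unfold Rminus. ring. Qed.

Theorem mainTheorem6 (mu : R) (Hmu : 0 < mu) :
  exists K : nat, forall k : nat, (K <= k)%nat ->
  let kr := INR k in
  let A1 := diagmat (mu / (2 * kr ^ 2)) (1 + mu / (4 * kr ^ 2)) in
  let A2 := diagmat (1 + mu / kr ^ 2) (1 + mu / (4 * kr ^ 2)) in
  exists (f : R -> R) (C t0 : R),
    C2_1 f /\ Derive f 0 = 0 /\
    0 < C /\ C <= 2 / 5 /\ t0 - C > 0 /\
    let u1 : fn3 := fun x y t => cos (kr * x) * f t in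
    let u2 : fn3 := fun x y t => cos (kr * x) * exp (- kr * (t - t0)) in
    (* (i) *)
    (forall x y t, t <= t0 - C -> solves_at mu A1 u1 x y t) /\
    (* (ii) *)
    (forall x y t, solves_at mu A2 u2 x y t) /\
    exists (u : fn3) (A : matfn),
      C2_3 u /\ periodic2 u /\ (forall i j, periodic2 (A i j)) /\
      reg_class (5 * kr ^ 2 / mu) 10 A /\
      (forall x y t, solves_at mu A u x y t) /\
      (forall x y t, t <= t0 - C ->
         u x y t = u1 x y t /\ forall i j, A i j x y t = A1 i j x y t) /\
      (forall x y t, t0 <= t ->
         u x y t = u2 x y t /\ forall i j, A i j x y t = A2 i j x y t).
Proof.
  destruct (K_exists mu Hmu) as [K HK]. exists K. intros k Hk kr A1 A2.
  specialize (HK k Hk). change (HypMK mu kr) in HK.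
  destruct (timing mu kr HK) as (Htm & HC0 & HC1 & Hsk & Ht0).
  destruct (tau_facts mu kr HK) as (Et & Htau & Hc & Hs).
  destruct (params mu kr HK) as (Ho&Ho2&_).
  assert (Hk50 : 50 <= kr) by (destruct HK as (_&_&Hk'&_); auto).
  assert (Hk2 : 0 < kr ^ 2) by (apply pow_lt; lra).
  assert (Hmuk : mu <= kr ^ 2) by (destruct HK as (_&_&_&Hm&_); auto).
  exists (gg mu kr), (tz mu kr - tau mu kr), (tz mu kr).
  split; [|split; [|split; [lra|split; [lra|split; [lra|]]]]].
  -
    split.
    + intros t. simpl. rewrite Dg by auto. exists (ddgg mu kr t). apply dgg_deriv; auto.
    + intros t. simpl. rewrite Dg, DDg by auto. apply continuity_pt_filterlim. apply ddgg_cont; auto.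
  - rewrite Dg by auto. unfold dgg. rewrite glue_left by lra.
    rewrite Rmult_0_r, sin_0. ring.
  - intros u1 u2.
    assert (Hw : forall (A : matfn) (a : R -> R) (b : R) (r : R -> R) x y t,
      (forall x y t, A IX IX x y t = a t) -> (forall x y t, A IX IY x y t = 0) ->
      (forall x y t, A IY IX x y t = 0) -> (forall x y t, A IY IY x y t = b) ->
      Derive (Derive r) t = (kr ^ 2 * a t - mu) * r t ->
      solves_at mu A (sep (fun x => cos (kr * x)) r) x y t).
    { intros A a b r x y t H1 H2 H3 H4 Hr. unfold solves_at.
      rewrite (wave_sep A a b) by auto. rewrite Hr, Dp, DDp. unfold sep. ring. }
    split; [|split; [|]].
    +
      intros x y t Ht. replace (tz mu kr - (tz mu kr - tau mu kr)) with (tau mu kr) in Ht by ring.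
      apply (Hw A1 (fun _ => mu / (2 * kr ^ 2)) (1 + mu / (4 * kr ^ 2))); try (intros; reflexivity).
      rewrite Dg, DDg by auto. rewrite ode by auto.
      destruct (region_left mu kr t HK Ht) as (E1 & E2). rewrite E1. reflexivity.
    +
      intros x y t.
      apply (Hw A2 (fun _ => 1 + mu / kr ^ 2) (1 + mu / (4 * kr ^ 2)) (fun t => exp (- kr * (t - tz mu kr))));
        try (intros; reflexivity).
      rewrite Dexp, DDexp. field. lra.
    + exists (sep (fun x => cos (kr * x)) (gg mu kr)), (Amat (aa mu kr) (1 + mu / (4 * kr ^ 2))).
      split; [|split; [|split; [|split; [|split; [|split]]]]].
      * apply C2_3_sep; auto using C1f_cos, C1f_dcos, C1f_gg, C1f_dgg.
      * intros x y t. unfold sep. split; [|reflexivity].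
        f_equal. replace (kr * (x + 2 * PI)) with (kr * x + 2 * INR k * PI) by (unfold kr; ring).
        apply cos_period.
      * intros i j x y t. destruct i, j; split; reflexivity.
      * split; [|split].
        -- intros x y t xi1 xi2. unfold quadform, Amat, sep.
           destruct (aa_bounds mu kr t HK) as (B1 & B2).
           assert (I1 : / (5 * kr ^ 2 / mu) = mu / (5 * kr ^ 2)) by (field; split; lra).
           rewrite I1.
           assert (Q1 : mu / (5 * kr ^ 2) <= mu / (2 * kr ^ 2)).
           { unfold Rdiv. apply Rmult_le_compat_l; [lra|]. apply Rinv_le_contravar; lra. }
           assert (Q2 : mu / kr ^ 2 <= 1).
           { apply Rmult_le_reg_r with (kr ^ 2); auto. unfold Rdiv. rewrite Rmult_assoc, Rinv_l; lra. }
           assert (Q3 : 0 <= mu / (4 * kr ^ 2) <= mu / kr ^ 2).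
           { split. apply Rlt_le, Rdiv_lt_0_compat; lra.
             unfold Rdiv. apply Rmult_le_compat_l; [lra|]. apply Rinv_le_contravar; lra. }
           assert (Q4 : 2 <= 5 * kr ^ 2 / mu).
           { apply Rmult_le_reg_r with mu; auto. unfold Rdiv. rewrite Rmult_assoc, Rinv_l; lra. }
           assert (Q5 : mu / (2 * kr ^ 2) <= mu / kr ^ 2).
           { unfold Rdiv. apply Rmult_le_compat_l; [lra|]. apply Rinv_le_contravar; lra. }
           assert (X1 : 0 <= xi1 ^ 2) by apply pow2_ge_0. assert (X2 : 0 <= xi2 ^ 2) by apply pow2_ge_0.
           set (a := aa mu kr t) in *. set (b := 1 + mu / (4 * kr ^ 2)).
           assert (Hq : 1 * a * xi1 * xi1 + 1 * 0 * xi1 * xi2 + 1 * 0 * xi2 * xi1 + 1 * b * xi2 * xi2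
                        = a * xi1 ^ 2 + b * xi2 ^ 2) by ring.
           rewrite Hq. split.
           ++ assert (mu / (5 * kr ^ 2) <= a) by lra. assert (mu / (5 * kr ^ 2) <= b) by (unfold b; lra).
              nra.
           ++ assert (a <= 5 * kr ^ 2 / mu) by lra. assert (b <= 5 * kr ^ 2 / mu) by (unfold b; lra).
              nra.
        -- intros i j. destruct i, j; simpl; apply C1_3_sep; auto using C1f_const, C1f_aa.
        -- intros i j x y t.
           assert (G : forall r, (forall t, Rabs (Derive r t) <= 10) ->
             Rabs (dsp IX (sep (fun _ => 1) r) x y t) <= 10 /\
             Rabs (dsp IY (sep (fun _ => 1) r) x y t) <= 10 /\
             Rabs (dt (sep (fun _ => 1) r) x y t) <= 10).
           { intros r Hr. rewrite dspX_sep, dspY_sep, dt_sep. unfold sep.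
             rewrite Derive_const. rewrite Rmult_0_l, Rabs_R0, Rmult_1_l.
             split; [lra|split; [lra|auto]]. }
           destruct i, j; simpl; apply G; intros s; try (rewrite Derive_const, Rabs_R0; lra).
           rewrite Da by auto. apply daa_bound; auto.
      * intros x y t. apply (Hw _ (aa mu kr) (1 + mu / (4 * kr ^ 2))); try (intros; reflexivity).
        -- intros; unfold Amat, sep; ring.
        -- intros; unfold Amat, sep; ring.
        -- intros; unfold Amat, sep; ring.
        -- intros; unfold Amat, sep; ring.
        -- rewrite Dg, DDg by auto. apply ode; auto.
      * intros x y t Ht. replace (tz mu kr - (tz mu kr - tau mu kr)) with (tau mu kr) in Ht by ring.
        destruct (region_left mu kr t HK Ht) as (E1 & E2).
        split; [reflexivity|]. intros i j. destruct i, j; unfold Amat, sep, A1, A2, diagmat; cbv beta iota; try ring.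
        rewrite E1. ring.
      * intros x y t Ht.
        destruct (region_right mu kr t HK Ht) as (E1 & E2).
        split; [unfold sep; rewrite E2; reflexivity|]. intros i j. destruct i, j; unfold Amat, sep, A1, A2, diagmat; cbv beta iota; try ring.
        rewrite E1. ring.
Qed.
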